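(* Let $\zeta_5=\exp(2\pi i/5)$, $K=\mathbb{Q}(\zeta_5)\subset\mathbb{C}$, $\mathcal{O}_K=\mathbb{Z}[\zeta_5]$, let $\sigma:K\to\mathbb{C}$ be the embedding with $\sigma(\zeta_5)=\zeta_5^2$, and let $\mathcal{S}=\{z\in\mathcal{O}_K : |\sigma(z)|\le 1\}$. If $z_1,z_2\in\mathcal{S}$ with $z_1\neq z_2$ and $|z_1-z_2|<\frac{\sqrt5}{2}$, then $z_1-z_2$ is a unit of $\mathcal{O}_K$.
   Context: Elements of $K$ are regarded as complex numbers via the inclusion $K\subset\mathbb{C}$. *)

(* Defs.v *)
From HB Require Import structures.
From mathcomp Require Import all_boot all_order all_algebra.
From mathcomp Require Import complex.
From mathcomp Require Import all_classical all_reals.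
From mathcomp Require Import trigo.
From mathcomp Require Import Rstruct Rstruct_topology.
Set Implicit Arguments. Unset Strict Implicit. Unset Printing Implicit Defensive.
Import Order.TTheory GRing.Theory Num.Theory.
Local Open Scope ring_scope.
Local Open Scope complex_scope.

Notation CC := (Rdefinitions.R)[i].

Definition zeta5 : CC := (cos (2 * pi / 5)) +i* (sin (2 * pi / 5)).

Definition zpoly (zeta : CC) (a : 'I_4 -> int) : CC :=
  \sum_(k < 4) (a k)%:~R * zeta ^+ k.

(* O_K = Z[zeta_5]: every element is uniquely sum_{k<4} a_k zeta_5^k, a_k in Z. *)
Definition OK (z : CC) : Prop := exists a : 'I_4 -> int, z = zpoly zeta5 a.

Definition unitOK (z : CC) : Prop :=
  OK z /\ exists w : CC, OK w /\ z * w = 1.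

Definition cabs (z : CC) : Rdefinitions.R := ComplexField.Normc.normc z.

(* Main.v *)
Require Import Defs.
From HB Require Import structures.
From mathcomp Require Import all_boot all_order all_algebra.
From mathcomp Require Import complex.
From mathcomp Require Import all_classical all_reals.
From mathcomp Require Import trigo.
From mathcomp Require Import Rstruct Rstruct_topology.
From mathcomp Require Import ring lra zify.
Import Order.TTheory GRing.Theory Num.Theory.
Local Open Scope ring_scope.
Local Open Scope complex_scope.

Section Alg.
Variable R : comRingType.
Variables (z c0 c1 c2 c3 : R).
Definition Dp (w : R) := c0 + c1 * w + c2 * w ^+ 2 + c3 * w ^+ 3.
Definition S0 := c0*c0 + c1*c1 + c2*c2 + c3*c3.
Definition S1 := c0*c1 + c1*c2 + c2*c3.
Definition S2 := c0*c2 + c1*c3 + c0*c3.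
Definition tau1 := z + z^+4.
Definition tau2 := z^+2 + z^+3.
Definition Nf := S0*S0 - S0*(S1+S2) - S1*S1 - S2*S2 + 3%:R*S1*S2.

Lemma I1 : z ^+ 5 = 1 -> Dp z * Dp (z ^+ 4) = S0 + S1 * tau1 + S2 * tau2.
Proof.
move=> h; apply/eqP; rewrite -subr_eq0; apply/eqP.
have -> : Dp z * Dp (z ^+ 4) - (S0 + S1 * tau1 + S2 * tau2) = (z^+5 - 1) * ((c3^+2) + (c3^+2*z^+5) + (c3^+2*z^+10) + (c2*c3*z) + (c2*c3*z^+4) + (c2*c3*z^+6) + (c2*c3*z^+9) + (c2^+2) + (c2^+2*z^+5) + (c1*c3*z^+2) + (c1*c3*z^+3) + (c1*c3*z^+8) + (c1*c2*z) + (c1*c2*z^+4) + (c1^+2) + (c0*c3*z^+2) + (c0*c3*z^+7) + (c0*c2*z^+3)).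
  by rewrite /Dp /S0 /S1 /S2 /tau1 /tau2; ring.
by rewrite h subrr mul0r.
Qed.

Lemma I2 : z ^+ 5 = 1 -> Dp (z^+2) * Dp ((z ^+ 4)^+2) = S0 + S1 * tau2 + S2 * tau1.
Proof.
move=> h; apply/eqP; rewrite -subr_eq0; apply/eqP.
have -> : Dp (z^+2) * Dp ((z ^+ 4)^+2) - (S0 + S1 * tau2 + S2 * tau1) = (z^+5 - 1) * ((c3^+2) + (c3^+2*z^+5) + (c3^+2*z^+10) + (c3^+2*z^+15) + (c3^+2*z^+20) + (c3^+2*z^+25) + (c2*c3*z^+2) + (c2*c3*z^+3) + (c2*c3*z^+7) + (c2*c3*z^+8) + (c2*c3*z^+12) + (c2*c3*z^+13) + (c2*c3*z^+17) + (c2*c3*z^+18) + (c2*c3*z^+23) + (c2^+2) + (c2^+2*z^+5) + (c2^+2*z^+10) + (c2^+2*z^+15) + (c1*c3*z) + (c1*c3*z^+4) + (c1*c3*z^+6) + (c1*c3*z^+9) + (c1*c3*z^+11) + (c1*c3*z^+16) + (c1*c3*z^+21) + (c1*c2*z^+2) + (c1*c2*z^+3) + (c1*c2*z^+7) + (c1*c2*z^+8) + (c1*c2*z^+13) + (c1^+2) + (c1^+2*z^+5) + (c0*c3*z) + (c0*c3*z^+4) + (c0*c3*z^+9) + (c0*c3*z^+14) + (c0*c3*z^+19) + (c0*c2*z) + (c0*c2*z^+6) + (c0*c2*z^+11) + (c0*c1*z^+3)).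
  by rewrite /Dp /S0 /S1 /S2 /tau1 /tau2; ring.
by rewrite h subrr mul0r.
Qed.

Lemma I3 : 1 + z + z^+2 + z^+3 + z^+4 = 0 ->
  (S0 + S1 * tau1 + S2 * tau2) * (S0 + S1 * tau2 + S2 * tau1) = Nf.
Proof.
move=> h; apply/eqP; rewrite -subr_eq0; apply/eqP.
have -> : (S0 + S1 * tau1 + S2 * tau2) * (S0 + S1 * tau2 + S2 * tau1) - Nf
   = (1 + z + z^+2 + z^+3 + z^+4) * ((c2*c3^+3) + (c2^+2*c3^+2) + (-c2^+2*c3^+2*z) + (c2^+2*c3^+2*z^+3) + (c2^+3*c3) + (c1*c3^+3) + (-(2)%:R*c1*c2*c3^+2) + ((3)%:R*c1*c2*c3^+2*z) + (c1*c2*c3^+2*z^+2) + (-c1*c2*c3^+2*z^+3) + (c1*c2*c3^+2*z^+4) + ((3)%:R*c1*c2^+2*c3) + (-(2)%:R*c1*c2^+2*c3*z) + ((2)%:R*c1*c2^+2*c3*z^+3) + (c1*c2^+3) + (c1^+2*c3^+2) + (-c1^+2*c3^+2*z) + (c1^+2*c3^+2*z^+3) + (-(2)%:R*c1^+2*c2*c3) + ((3)%:R*c1^+2*c2*c3*z) + (c1^+2*c2*c3*z^+2) + (-c1^+2*c2*c3*z^+3) + (c1^+2*c2*c3*z^+4) + (c1^+2*c2^+2) + (-c1^+2*c2^+2*z) + (c1^+2*c2^+2*z^+3) + (c1^+3*c3) + (c1^+3*c2) + (c0*c3^+3) + (-(2)%:R*c0*c2*c3^+2) + ((3)%:R*c0*c2*c3^+2*z)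 + (c0*c2*c3^+2*z^+2) + (-c0*c2*c3^+2*z^+3) + (c0*c2*c3^+2*z^+4) + (-(2)%:R*c0*c2^+2*c3) + ((3)%:R*c0*c2^+2*c3*z) + (c0*c2^+2*c3*z^+2) + (-c0*c2^+2*c3*z^+3) + (c0*c2^+2*c3*z^+4) + (c0*c2^+3) + ((3)%:R*c0*c1*c3^+2) + (-(2)%:R*c0*c1*c3^+2*z) + ((2)%:R*c0*c1*c3^+2*z^+3) + (c0*c1*c2*c3) + (-c0*c1*c2*c3*z) + (c0*c1*c2*c3*z^+2) + ((3)%:R*c0*c1*c2*c3*z^+3) + (c0*c1*c2*c3*z^+4) + (-(2)%:R*c0*c1*c2^+2) + ((3)%:R*c0*c1*c2^+2*z) + (c0*c1*c2^+2*z^+2) + (-c0*c1*c2^+2*z^+3) + (c0*c1*c2^+2*z^+4) + (-(2)%:R*c0*c1^+2*c3) + ((3)%:R*c0*c1^+2*c3*z) + (c0*c1^+2*c3*z^+2) + (-c0*c1^+2*c3*z^+3) + (c0*c1^+2*c3*z^+4) + ((3)%:R*c0*c1^+2*c2) + (-(2)%:R*c0*c1^+2*c2*z) + ((2)%:R*c0*c1^+2*c2*z^+3) + (c0*c1^+3) + (c0^+2*c3^+2) + (-c0^+2*c3^+2*z) + (c0^+2*c3^+2*z^+3) + ((3)%:R*c0^+2*c2*c3) + (-(2)%:R*c0^+2*c2*c3*z) + ((2)%:R*c0^+2*c2*c3*z^+3) + (c0^+2*c2^+2) + (-c0^+2*c2^+2*z) + (c0^+2*c2^+2*z^+3) + (-(2)%:R*c0^+2*c1*c3)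 + ((3)%:R*c0^+2*c1*c3*z) + (c0^+2*c1*c3*z^+2) + (-c0^+2*c1*c3*z^+3) + (c0^+2*c1*c3*z^+4) + (-(2)%:R*c0^+2*c1*c2) + ((3)%:R*c0^+2*c1*c2*z) + (c0^+2*c1*c2*z^+2) + (-c0^+2*c1*c2*z^+3) + (c0^+2*c1*c2*z^+4) + (c0^+2*c1^+2) + (-c0^+2*c1^+2*z) + (c0^+2*c1^+2*z^+3) + (c0^+3*c3) + (c0^+3*c2) + (c0^+3*c1)).
  by rewrite /Nf /S0 /S1 /S2 /tau1 /tau2; ring.
by rewrite h mul0r.
Qed.

Definition M_ := (-c2*c3^+3) + (-c2^+2*c3^+2) + (-c2^+3*c3) + (-c1*c3^+3) + (-(2)%:R*c1*c2*c3^+2) + (-(3)%:R*c1*c2^+2*c3) + (-c1*c2^+3) + (-c1^+2*c3^+2) + (-(2)%:R*c1^+2*c2*c3) + (-c1^+2*c2^+2) + (-c1^+3*c3) + (-c1^+3*c2) + (-c0*c3^+3) + (-(2)%:R*c0*c2*c3^+2) + (-(2)%:R*c0*c2^+2*c3) + (-c0*c2^+3) + (-(3)%:R*c0*c1*c3^+2) + (-(5)%:R*c0*c1*c2*c3) + (-(2)%:R*c0*c1*c2^+2) + (-(2)%:R*c0*c1^+2*c3) + (-(3)%:R*c0*c1^+2*c2) + (-c0*c1^+3) + (-c0^+2*c3^+2) + (-(3)%:R*c0^+2*c2*c3) + (-c0^+2*c2^+2) + (-(2)%:R*c0^+2*c1*c3) + (-(2)%:R*c0^+2*c1*c2) + (-c0^+2*c1^+2)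 + (-c0^+3*c3) + (-c0^+3*c2) + (-c0^+3*c1).
Lemma I4 : Nf = (c0+c1+c2+c3)^+4 + 5%:R * M_.
Proof. by rewrite /Nf /S0 /S1 /S2 /M_; ring. Qed.
End Alg.
Arguments Dp {R}. Arguments S0 {R}. Arguments S1 {R}. Arguments S2 {R}. Arguments tau1 {R}. Arguments tau2 {R}. Arguments Nf {R}.
Arguments I1 {R}. Arguments I2 {R}. Arguments I3 {R}. Arguments I4 {R}. Arguments M_ {R}.

Lemma demoivre (x : Rdefinitions.R) (n : nat) :
  (trigo.cos x +i* trigo.sin x) ^+ n = trigo.cos (n%:R * x) +i* trigo.sin (n%:R * x).
Proof.
elim: n => [|n IH]; first by rewrite expr0 mul0r trigo.cos0 trigo.sin0.
rewrite exprS IH -addn1 natrD mulrDl mul1r addrC trigo.cosD trigo.sinD.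
simpc. congr (_ +i* _); ring.
Qed.

Lemma zeta5_5 : zeta5 ^+ 5 = 1.
Proof.
rewrite /zeta5 demoivre.
have -> : (5%:R * (2 * trigo.pi / 5) : Rdefinitions.R) = trigo.pi *+ 2.
  by rewrite mulr2n; field.
by rewrite trigo.cos2pi trigo.sin2pi.
Qed.

Lemma zeta5_ne1 : zeta5 != 1.
Proof.
apply/eqP; rewrite /zeta5 => -[_ /eqP]; apply/negP; rewrite gt_eqF //.
apply: trigo.sin_gt0_pi; have := @trigo.pi_gt0 Rdefinitions.R => h; apply/andP; split; lra.
Qed.

Lemma zeta5_E : 1 + zeta5 + zeta5^+2 + zeta5^+3 + zeta5^+4 = 0.
Proof.
have: (zeta5 - 1) * (1 + zeta5 + zeta5^+2 + zeta5^+3 + zeta5^+4) = 0.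
  have -> : (zeta5 - 1) * (1 + zeta5 + zeta5^+2 + zeta5^+3 + zeta5^+4) = zeta5^+5 - 1 by ring.
  by rewrite zeta5_5 subrr.
move/eqP; rewrite mulf_eq0 subr_eq0 (negbTE zeta5_ne1) /= => /eqP //.
Qed.

Lemma zeta5_conj : conjc zeta5 = zeta5 ^+ 4.
Proof.
have h : zeta5 * conjc zeta5 = 1.
  rewrite /zeta5; simpc. apply/eqP; rewrite eq_complex /=; apply/andP; split; apply/eqP; rewrite /=.
    by rewrite -!expr2; exact: trigo.cos2Dsin2.
  ring.
have nz : zeta5 != 0.
  by apply/eqP => z0; move: zeta5_5; rewrite z0 expr0n /= => /eqP; rewrite eq_sym oner_eq0.
by apply: (mulfI nz); rewrite h -exprS zeta5_5.
Qed.

Lemma cabs2 (z : CC) : ((cabs z) ^+ 2)%:C = z * conjc z.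
Proof.
case: z => x y; rewrite /cabs /= sqr_sqrtr ?addr_ge0 ?sqr_ge0 //.
simpc. rewrite /=. congr (_ +i* _); ring.
Qed.

Definition i0 : 'I_4 := @Ordinal 4 0 isT.
Definition i1 : 'I_4 := @Ordinal 4 1 isT.
Definition i2 : 'I_4 := @Ordinal 4 2 isT.
Definition i3 : 'I_4 := @Ordinal 4 3 isT.

Lemma zpolyE (z : CC) (a : 'I_4 -> int) :
  zpoly z a = Dp (a i0)%:~R (a i1)%:~R (a i2)%:~R (a i3)%:~R z.
Proof.
rewrite /zpoly !big_ord_recr big_ord0 /= /Dp expr0 expr1 mulr1 GRing.add0r.
have E : forall i j : 'I_4, val i = val j -> (a i)%:~R = (a j)%:~R :> CC.
  by move=> i j /val_inj ->.
congr (_ + _ + _ + _); try congr (_ * _); exact: E.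
Qed.

Definition mk4 (x0 x1 x2 x3 : int) : 'I_4 -> int :=
  fun k => nth 0 [:: x0; x1; x2; x3] k.

Lemma OKP (x : CC) : OK x <-> exists x0 x1 x2 x3 : int,
  x = Dp x0%:~R x1%:~R x2%:~R x3%:~R zeta5.
Proof.
split.
  by case=> a ->; exists (a i0), (a i1), (a i2), (a i3); rewrite zpolyE.
by case=> [x0 [x1 [x2 [x3 ->]]]]; exists (mk4 x0 x1 x2 x3); rewrite zpolyE.
Qed.

Lemma OK_int (n : int) : OK n%:~R.
Proof. by apply/OKP; exists n, 0, 0, 0; rewrite /Dp !mulr0z; ring. Qed.

Lemma OK_add x y : OK x -> OK y -> OK (x + y).
Proof.
move=> /OKP [x0 [x1 [x2 [x3 ->]]]] /OKP [y0 [y1 [y2 [y3 ->]]]].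
apply/OKP; exists (x0 + y0), (x1 + y1), (x2 + y2), (x3 + y3).
by rewrite /Dp !rmorphD; ring.
Qed.

Lemma OK_intmul (n : int) x : OK x -> OK (n%:~R * x).
Proof.
move=> /OKP [x0 [x1 [x2 [x3 ->]]]].
apply/OKP; exists (n * x0), (n * x1), (n * x2), (n * x3).
by rewrite /Dp !rmorphM; ring.
Qed.

Lemma OK_zmul x : OK x -> OK (zeta5 * x).
Proof.
move=> /OKP [x0 [x1 [x2 [x3 ->]]]].
apply/OKP; exists (- x3), (x0 - x3), (x1 - x3), (x2 - x3).
have h4 : zeta5 ^+ 4 = -1 - zeta5 - zeta5^+2 - zeta5^+3.
  by apply/eqP; rewrite -subr_eq0; apply/eqP; rewrite -zeta5_E; ring.
rewrite /Dp !rmorphB rmorphN /=.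
have -> : zeta5 * ((x0%:~R : CC) + x1%:~R * zeta5 + x2%:~R * zeta5 ^+ 2 + x3%:~R * zeta5 ^+ 3)
  = x0%:~R * zeta5 + x1%:~R * zeta5^+2 + x2%:~R * zeta5 ^+ 3 + x3%:~R * zeta5 ^+ 4 by ring.
rewrite h4; ring.
Qed.

Lemma OK_mul x y : OK x -> OK y -> OK (x * y).
Proof.
move=> hx /OKP [y0 [y1 [y2 [y3 ->]]]].
have e : x * Dp y0%:~R y1%:~R y2%:~R y3%:~R zeta5 =
  y0%:~R * x + y1%:~R * (zeta5 * x) + y2%:~R * (zeta5 * (zeta5 * x))
  + y3%:~R * (zeta5 * (zeta5 * (zeta5 * x))) by rewrite /Dp; ring.
rewrite e; repeat apply: OK_add; apply: OK_intmul; do ?apply: OK_zmul; exact hx.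
Qed.

Lemma OK_exp x n : OK x -> OK (x ^+ n).
Proof.
move=> hx; elim: n => [|n IH]; first by rewrite expr0; exact: (OK_int 1).
by rewrite exprS; apply: OK_mul.
Qed.

Lemma OK_zpoly x (c : 'I_4 -> int) : OK x -> OK (zpoly x c).
Proof.
move=> hx; rewrite zpolyE /Dp.
repeat apply: OK_add.
all: first [exact: OK_int | apply: OK_intmul; first [exact hx | exact: OK_exp hx]].
Qed.

Lemma OK_zeta : OK zeta5.
Proof. by rewrite -[zeta5]mulr1; apply: OK_zmul; exact: (OK_int 1). Qed.

Lemma sq5 (X Y : int) : X * X = 5 * (Y * Y) -> Y = 0.
Proof.
move=> h.
have hn : (`|X| * `|X| = 5 * (`|Y| * `|Y|))%N by have := congr1 absz h; rewrite !abszM.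
have [e0|hy] := posnP (absz Y).
  by move/eqP: e0; rewrite absz_eq0 => /eqP.
exfalso.
have hx : (0 < absz X)%N by move: hn hy; nia.
have := congr1 (logn 5) hn.
rewrite !lognM ?muln_gt0 ?hx ?hy // (@logn_prime 5 5) //=.
lia.
Qed.

Lemma Nmod (N s M : int) : N = s^+4 + 5%:R * M -> 0 < N -> N < 5 -> N = 1.
Proof.
move=> e.
have hs := divz_eq s 5.
have hr0 : 0 <= (s %% 5)%Z by apply: modz_ge0.
have hr5 : (s %% 5)%Z < 5 by apply: ltz_pmod.
set t := (s %/ 5)%Z in hs; set r := (s %% 5)%Z in hs hr0 hr5.
have e2 : s^+4 = r^+4 + 5 * (125 * t^+4 + 100 * t^+3 * r + 30 * t^+2 * r^+2 + 4 * t * r^+3).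
  by rewrite hs; ring.
have [k hk] : exists k, r^+4 = 5*k \/ r^+4 = 5*k+1.
  have : r = 0 \/ r = 1 \/ r = 2 \/ r = 3 \/ r = 4 by lia.
  case=> [->|[->|[->|[->|->]]]].
  - by exists 0; left.
  - by exists 0; right.
  - by exists 3; right.
  - by exists 16; right.
  - by exists 51; right.
move: e e2 hk; generalize (s^+4) (r^+4) => S4 R4.
lia.
Qed.

Lemma cabs_ge0 z : 0 <= cabs z.
Proof. by case: z => x y; exact: sqrtr_ge0. Qed.

Lemma conj_zpoly w (c : 'I_4 -> int) : conjc (zpoly w c) = zpoly (conjc w) c.
Proof.
rewrite /zpoly rmorph_sum; apply: eq_bigr => k _.
by rewrite rmorphM rmorph_int rmorphXn.
Qed.

Lemma castS0 (c0 c1 c2 c3 : int) : (S0 c0 c1 c2 c3)%:~R = S0 (c0%:~R : CC) c1%:~R c2%:~R c3%:~R.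
Proof. by rewrite /S0 !(rmorphD, rmorphM). Qed.
Lemma castS1 (c0 c1 c2 c3 : int) : (S1 c0 c1 c2 c3)%:~R = S1 (c0%:~R : CC) c1%:~R c2%:~R c3%:~R.
Proof. by rewrite /S1 !(rmorphD, rmorphM). Qed.
Lemma castS2 (c0 c1 c2 c3 : int) : (S2 c0 c1 c2 c3)%:~R = S2 (c0%:~R : CC) c1%:~R c2%:~R c3%:~R.
Proof. by rewrite /S2 !(rmorphD, rmorphM). Qed.
Lemma castNf (c0 c1 c2 c3 : int) : (Nf c0 c1 c2 c3)%:~R = Nf (c0%:~R : CC) c1%:~R c2%:~R c3%:~R.
Proof. rewrite /Nf /S0 /S1 /S2; ring. Qed.
Lemma conjcX (x : CC) n : conjc (x ^+ n) = (conjc x) ^+ n.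
Proof. exact: rmorphXn. Qed.
Lemma rcM (x y : Rdefinitions.R) : (x * y)%:C = x%:C * y%:C :> CC.
Proof. exact: rmorphM. Qed.
Lemma rcint (n : int) : ((n%:~R : Rdefinitions.R))%:C = n%:~R :> CC.
Proof. exact: rmorph_int. Qed.
Lemma lin3 (x y z : int) : 2 * x - y - z = 0 -> y - z = 0 -> y = x /\ z = x.
Proof. lia. Qed.

Theorem mainTheorem6 (a b : 'I_4 -> int) :
  cabs (zpoly (zeta5 ^+ 2) a) <= 1 ->
  cabs (zpoly (zeta5 ^+ 2) b) <= 1 ->
  zpoly zeta5 a <> zpoly zeta5 b ->
  cabs (zpoly zeta5 a - zpoly zeta5 b) < Num.sqrt 5 / 2 ->
  unitOK (zpoly zeta5 a - zpoly zeta5 b).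
Proof.
move=> h1 h2 hne hlt.
pose c : 'I_4 -> int := fun k => a k - b k.
have lin : forall w, zpoly w a - zpoly w b = zpoly w c.
  move=> w; rewrite /zpoly -sumrB; apply: eq_bigr => k _.
  by rewrite /c rmorphB mulrBl.
have dnz : zpoly zeta5 c != 0 by rewrite -lin subr_eq0; apply/eqP.
rewrite lin in hlt *.
pose p := cabs (zpoly zeta5 c) ^+ 2.
pose q := cabs (zpoly (zeta5 ^+ 2) c) ^+ 2.
have hp : p%:C = S0 (c i0)%:~R (c i1)%:~R (c i2)%:~R (c i3)%:~R
   + S1 (c i0)%:~R (c i1)%:~R (c i2)%:~R (c i3)%:~R * tau1 zeta5
   + S2 (c i0)%:~R (c i1)%:~R (c i2)%:~R (c i3)%:~R * tau2 zeta5.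
  by rewrite /p cabs2 conj_zpoly zeta5_conj !zpolyE; apply: I1; exact: zeta5_5.
have hq : q%:C = S0 (c i0)%:~R (c i1)%:~R (c i2)%:~R (c i3)%:~R
   + S1 (c i0)%:~R (c i1)%:~R (c i2)%:~R (c i3)%:~R * tau2 zeta5
   + S2 (c i0)%:~R (c i1)%:~R (c i2)%:~R (c i3)%:~R * tau1 zeta5.
  by rewrite /q cabs2 conj_zpoly conjcX zeta5_conj !zpolyE; apply: I2; exact: zeta5_5.
pose N := Nf (c i0) (c i1) (c i2) (c i3).
have hN : p * q = N%:~R.
  apply: complexI; rewrite rcM hp hq I3; last exact: zeta5_E.
  by rewrite rcint /N castNf.
have hx0 := cabs_ge0 (zpoly zeta5 c).
have hxpos : 0 < cabs (zpoly zeta5 c).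
  rewrite lt_def hx0 andbT; apply/eqP => e.
  by move: dnz; rewrite (ComplexField.Normc.eq0_normc e) eqxx.
have hp0 : 0 < p by rewrite /p exprn_gt0.
have s5 : Num.sqrt 5 ^+ 2 = 5 :> Rdefinitions.R by rewrite sqr_sqrtr // ler0n.
have s50 : 0 <= Num.sqrt 5 :> Rdefinitions.R by apply: sqrtr_ge0.
have hp5 : p < 5 / 4.
  rewrite /p; move: hlt hx0 s5 s50; set x := cabs _; set s := Num.sqrt _; nra.
have hy2 : cabs (zpoly (zeta5 ^+ 2) c) <= 2.
  rewrite -lin; apply: (le_trans (le_normcD _ _)).
  rewrite normcN; apply: (le_trans (lerD h1 h2)); lra.
have hy0 := cabs_ge0 (zpoly (zeta5 ^+ 2) c).
have hq4 : q <= 4.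
  rewrite /q; move: hy2 hy0; set y := cabs _; nra.
have hq0 : 0 <= q by rewrite /q exprn_ge0.
have hN5 : N < 5.
  have : (N%:~R : Rdefinitions.R) < (5 : int)%:~R.
    rewrite -hN; rewrite [X in _ < X]/=; nra.
  by rewrite ltr_int.
have hN0 : 0 <= N.
  have : (0 : int)%:~R <= (N%:~R : Rdefinitions.R) by rewrite -hN /=; nra.
  by rewrite ler_int.
have hNn0 : N != 0.
  apply/eqP => N0.
  pose s0 := S0 (c i0) (c i1) (c i2) (c i3).
  pose s1 := S1 (c i0) (c i1) (c i2) (c i3).
  pose s2 := S2 (c i0) (c i1) (c i2) (c i3).
  have e4 : (2 * s0 - s1 - s2) * (2 * s0 - s1 - s2) = 5 * ((s1 - s2) * (s1 - s2)).
    apply/eqP; rewrite -subr_eq0; apply/eqP.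
    have <- : 4 * N = 0 by rewrite N0 mulr0.
    by rewrite /N /Nf /s0 /s1 /s2; ring.
  have Y0 := sq5 _ _ e4.
  have X0 : 2 * s0 - s1 - s2 = 0.
    have : (2 * s0 - s1 - s2) * (2 * s0 - s1 - s2) = 0.
      by rewrite e4 Y0.
    by move/eqP; rewrite mulf_eq0 orbb => /eqP.
  have [e12 e22] := lin3 _ _ _ X0 Y0.
  move: hp; rewrite -castS0 -castS1 -castS2 -/s0 -/s1 -/s2 e12 e22.
  have -> : s0%:~R + s0%:~R * tau1 zeta5 + s0%:~R * tau2 zeta5
     = s0%:~R * (1 + zeta5 + zeta5^+2 + zeta5^+3 + zeta5^+4) :> CC.
    by rewrite /tau1 /tau2; ring.
  rewrite zeta5_E mulr0 => /complexI p0.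
  by move: hp0; rewrite p0 ltxx.
have N1 : N = 1.
  apply: (@Nmod N (c i0 + c i1 + c i2 + c i3) (M_ (c i0) (c i1) (c i2) (c i3))).
  - by rewrite /N I4.
  - by rewrite lt_def hNn0.
  - exact: hN5.
have pq1 : p * q = 1 by rewrite hN N1.
split; first by exists c.
exists (conjc (zpoly zeta5 c) * q%:C); split.
  apply: OK_mul.
    by rewrite conj_zpoly zeta5_conj; apply: OK_zpoly; apply: OK_exp; exact: OK_zeta.
  rewrite /q cabs2 conj_zpoly conjcX zeta5_conj; apply: OK_mul; apply: OK_zpoly; 
    do ?apply: OK_exp; exact: OK_zeta.
by rewrite mulrA -cabs2 -/p -rcM pq1.
Qed.
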